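(* Let $E$ be a real or complex Banach space, let $T$ be a strongly continuous one-parameter semigroup on $E$, let $\mathcal U$ be a countably incomplete ultrafilter on an index set $I$, and let ${}^*$ be the nonstandard universe given by the bounded ultrapower with respect to $\mathcal U$. Let $\Phi:\ell^\infty_I(E)/c_{\mathcal U}\to\widehat E$ be the map $\Phi(\langle f_i\rangle+c_{\mathcal U})=\widehat{f}$, where $f\in{}^*E$ is the $\mathcal U$-equivalence class of $\langle f_i\rangle$, and let $\iota: m^T/(c_{\mathcal U}\cap m^T)\to\ell^\infty_I(E)/c_{\mathcal U}$ be $\iota(\langle f_i\rangle+c_{\mathcal U}\cap m^T)=\langle f_i\rangle+c_{\mathcal U}$. Then $\widehat E$ is isomorphic to $\ell^\infty_I(E)/c_{\mathcal U}$ (via $\Phi$), and $\widehat{E}_T$ is isomorphic to $m^T/(c_{\mathcal U}\cap m^T)$; more precisely $\Phi(\iota(m^T/(c_{\mathcal U}\cap m^T)))=\widehat{E}_T$.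
   Context: A semigroup on $E$ is a map $T:[0,\infty)\to\mathcal L(E)$ (bounded linear operators) with $T(0)=\mathrm{Id}$ and $T(s+t)=T(s)T(t)$; it is strongly continuous if $\lim_{t\to0}\|T(t)f-f\|=0$ for every $f\in E$. $\ell^\infty_I(E)$ is the space of bounded $E$-valued families $\langle f_i\rangle_{i\in I}$ with the sup-norm. $c_{\mathcal U}$ is the set of $\langle f_i\rangle\in\ell^\infty_I(E)$ such that for every $\varepsilon>0$ there is $J\in\mathcal U$ with $\|f_i\|<\varepsilon$ for all $i\in J$; $\ell^\infty_I(E)/c_{\mathcal U}$ carries the quotient norm. $\tilde T(t)\langle f_i\rangle:=\langle T(t)f_i\rangle$ is a semigroup on $\ell^\infty_I(E)$, and $m^T:=\{x\in\ell^\infty_I(E):\lim_{t\to0}\|\tilde T(t)x-x\|=0\}$. Nonstandard setting: the bounded ultrapower is the nonstandard universe (superstructure embedding ${}^*$ satisfying transfer for bounded formulas) in which ${}^*E$ consists of $\mathcal U$-equivalence classes of $I$-sequences in $E$, and ${}^*$ acts on $E$ as the diagonal embedding. A nonstandard real $r$ is finite if $|r|<n$ for some standard $n\in\mathbb N$, infinitesimal if $|r|<1/n$ for all standard $n\ge1$; $f\approx g$ means $\|f-g\|$ is infinitesimal. $\mathrm{fin}({}^*E)$ is the set of $f\in{}^*E$ with $\|f\|$ finite, $E_0$ the set of $f$ with $\|f\|$ infinitesimal, $\widehat E=\mathrm{fin}({}^*E)/E_0$ with class map $f\mapsto\widehat f$ and norm $\|\widehat f\|=\mathrm{st}(\|f\|)$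 (standard part). $E_T$ is the set of $f\in\mathrm{fin}({}^*E)$ such that for every standard $\varepsilon>0$ there is a standard $\delta>0$ with $\|{}^*T(t)f-f\|<\varepsilon$ for all positive nonstandard $t<\delta$ (equivalently, $\|{}^*T(h)f-f\|$ is infinitesimal for every positive infinitesimal $h$); $\widehat{E}_T=E_T/E_0\subseteq\widehat E$. *)

(* Defs.v *)
From HB Require Import structures.
From mathcomp Require Import all_boot all_order all_algebra.
From mathcomp Require Import all_classical all_reals all_analysis.
Import Order.TTheory GRing.Theory Num.Theory.
Import numFieldNormedType.Exports.
Set Implicit Arguments. Unset Strict Implicit. Unset Printing Implicit Defensive.
Local Open Scope classical_set_scope.
Local Open Scope ring_scope.

Section defs.
Context {R : realType} {E : normedModType R} {I : Type}.

Definition ultrafilter_on (U : set (set I)) : Prop :=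
  [/\ U setT, ~ U set0,
      (forall A B, U A -> U B -> U (A `&` B)),
      (forall A B, A `<=` B -> U A -> U B)
    & (forall A, U A \/ U (~` A))].

Definition countably_incomplete (U : set (set I)) : Prop :=
  exists J : nat -> set I, (forall n, U (J n)) /\ ~ U [set i | forall n, J n i].

Definition bounded_linear (A : E -> E) : Prop :=
  (forall (a : R) (u v : E), A (a *: u + v) = a *: A u + A v) /\
  exists M : R, forall u, `|A u| <= M * `|u|.

Definition semigroup (T : R -> E -> E) : Prop :=
  [/\ (forall t, 0 <= t -> bounded_linear (T t)),
      T 0 = id
    & (forall s t, 0 <= s -> 0 <= t -> T (s + t) = T s \o T t)].

Definition strongly_continuous (T : R -> E -> E) : Prop :=
  forall (f : E) (e : R), 0 < e ->
    exists d : R, 0 < d /\ forall t, 0 <= t < d -> `|T t f - f| < e.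

Definition bounded_family (x : I -> E) : Prop :=
  exists M : R, forall i, `|x i| <= M.

Definition linf_norm (x : I -> E) : R := sup (range (fun i => `|x i|)).

Definition cU (U : set (set I)) (x : I -> E) : Prop :=
  bounded_family x /\
  forall e : R, 0 < e -> exists J, U J /\ forall i, J i -> `|x i| < e.

(* m^T : elements of l^oo on which tilde T is strongly continuous *)
Definition mT (T : R -> E -> E) (x : I -> E) : Prop :=
  bounded_family x /\
  forall e : R, 0 < e -> exists d : R, 0 < d /\
    forall t, 0 < t < d -> linf_norm (fun i => T t (x i) - x i) < e.

Definition quot_norm (S : set (I -> E)) (x : I -> E) : R :=
  inf [set linf_norm (fun i => x i - c i) | c in S].

(* An element of *E (resp. *R) is represented by a family I -> E (resp.
   I -> R); two families represent the same element iff they agree on a set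
   of U.  All predicates below are invariant under this equivalence; by Los,
   relations in *R between classes hold iff they hold on a U-set. *)
Definition ns_finite (U : set (set I)) (r : I -> R) : Prop :=
  exists n : nat, U [set i | `|r i| < n%:R].

Definition ns_infinitesimal (U : set (set I)) (r : I -> R) : Prop :=
  forall n : nat, U [set i | `|r i| < n.+1%:R^-1].

Definition ns_fin (U : set (set I)) (f : I -> E) : Prop :=
  ns_finite U (fun i => `|f i|).

(* f ~ g, i.e. equality of the classes in hat E *)
Definition ns_approx (U : set (set I)) (f g : I -> E) : Prop :=
  ns_infinitesimal U (fun i => `|f i - g i|).

Definition is_st (U : set (set I)) (r : I -> R) (s : R) : Prop :=
  ns_infinitesimal U (fun i => r i - s).

Definition E_T (U : set (set I)) (T : R -> E -> E) (f : I -> E) : Prop :=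
  ns_fin U f /\
  forall e : R, 0 < e -> exists d : R, 0 < d /\
    forall t : I -> R, U [set i | 0 < t i < d] ->
      U [set i | `|T (t i) (f i) - f i| < e].

(* Phi on representatives: the family <f_i> is sent to its class in *E
   (then to hat E); on representatives this is the identity. *)
Definition Phi (x : I -> E) : I -> E := x.

End defs.

(* Main.v *)
Require Import Defs.
From HB Require Import structures.
From mathcomp Require Import all_boot all_order all_algebra.
From mathcomp Require Import all_classical all_reals all_analysis.
From mathcomp Require Import ring lra.
Import Order.TTheory GRing.Theory Num.Theory.
Import numFieldNormedType.Exports.
Local Open Scope classical_set_scope.
Local Open Scope ring_scope.

Section basics.
Context {R : realType}.

Lemma exists_nat_gt (r : R) : exists n : nat, r < n%:R.
Proof.
exists (Num.trunc `|r|).+1.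
have /andP[_ h] := truncn_itv (normr_ge0 r).
exact: le_lt_trans (ler_norm r) h.
Qed.

Lemma exists_inv_lt (e : R) : 0 < e -> exists n : nat, n.+1%:R^-1 < e.
Proof.
move=> e0; have [n hn] := exists_nat_gt e^-1.
exists n; rewrite -(invrK e) ltf_pV2 ?posrE ?invr_gt0 //.
by rewrite (lt_le_trans hn) // ler_nat.
Qed.

End basics.

Section ultra.
Context {I : Type} {U : set (set I)} (HU : ultrafilter_on U).

Lemma UT : U setT. Proof. by case: HU. Qed.
Lemma UI {A B} : U A -> U B -> U (A `&` B). Proof. by case: HU => _ _ h _ _; apply: h. Qed.
Lemma Umono {A B} : A `<=` B -> U A -> U B. Proof. by case: HU => _ _ _ h _; apply: h. Qed.
Lemma Une {A} : U A -> exists i, A i.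
Proof.
case: HU => _ h0 _ _ _ UA; apply: contrapT => nA; apply: h0.
suff -> : set0 = A by [].
by apply/seteqP; split => // i Ai; exfalso; apply: nA; exists i.
Qed.
Lemma Ucompl {A} : ~ U A -> U (~` A).
Proof. by case: HU => _ _ _ _ h nA; case: (h A). Qed.


Lemma Uall (A : set I) : (forall i, A i) -> U A.
Proof. by move=> h; exact: (Umono (fun i _ => h i) UT). Qed.
Lemma Inonempty : exists i : I, True.
Proof. by have [i _] := Une UT; exists i. Qed.

End ultra.
Section linf.
Context {R : realType} {E : normedModType R} {I : Type}.
Implicit Types (x y z : I -> E).

Lemma linf_ge z i : bounded_family z -> `|z i| <= linf_norm z.
Proof.
move=> [M hM]; rewrite /linf_norm; apply: ub_le_sup; last by exists i.
by exists M => _ [j _ <-]; exact: hM.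
Qed.

Lemma linf_le z (B : R) : (exists i : I, True) -> (forall i, `|z i| <= B) ->
  linf_norm z <= B.
Proof.
move=> [i _] h; apply: ge_sup; first by exists `|z i|, i.
by move=> _ [j _ <-]; exact: h.
Qed.

Lemma linf_ge0 z : (exists i : I, True) -> bounded_family z -> 0 <= linf_norm z.
Proof. by move=> [i _] bz; exact: le_trans (normr_ge0 (z i)) (linf_ge z i bz). Qed.

Lemma bounded_sub {x y} : bounded_family x -> bounded_family y ->
  bounded_family (fun i => x i - y i).
Proof.
move=> [M hM] [N hN]; exists (M + N) => i.
exact: le_trans (ler_normB _ _) (lerD (hM i) (hN i)).
Qed.

Lemma bl0 {A : E -> E} : bounded_linear A -> A 0 = 0.
Proof.
move=> [_ [M hM]]; apply/normr0_eq0/eqP; rewrite eq_le normr_ge0 andbT.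
by have := hM 0; rewrite normr0 mulr0.
Qed.

Lemma bounded_Tx {A : E -> E} {x} : bounded_linear A -> bounded_family x ->
  bounded_family (fun i => A (x i) - x i).
Proof.
move=> [_ [M hM]] [N hN]; apply: bounded_sub => //; last by exists N.
exists (`|M| * N) => i; apply: le_trans (hM _) _.
apply: le_trans (ler_wpM2r (normr_ge0 _) (ler_norm M)) _.
by apply: ler_wpM2l => //; exact: normr_ge0.
Qed.

End linf.
Section lin.
Context {R : realType} {E : normedModType R}.

Lemma blZ {A : E -> E} : bounded_linear A -> forall a u, A (a *: u) = a *: A u.
Proof. by move=> BL a u; rewrite -[a *: u]addr0 BL.1 (bl0 BL) addr0. Qed.

Lemma blD {A : E -> E} : bounded_linear A -> forall u v, A (u + v) = A u + A v.
Proof. by move=> BL u v; rewrite -[u in LHS]scale1r BL.1 scale1r. Qed.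

Lemma blN {A : E -> E} : bounded_linear A -> forall u, A (- u) = - A u.
Proof. by move=> BL u; rewrite -scaleN1r (blZ BL) scaleN1r. Qed.

Lemma blB {A : E -> E} : bounded_linear A -> forall u v, A (u - v) = A u - A v.
Proof. by move=> BL u v; rewrite (blD BL) (blN BL). Qed.

Lemma blsum {A : E -> E} : bounded_linear A -> forall n (F : nat -> E),
  A (\sum_(j < n) F j) = \sum_(j < n) A (F j).
Proof.
move=> BL; elim=> [|n IH] F; first by rewrite !big_ord0 (bl0 BL).
by rewrite !big_ord_recr /= (blD BL) IH.
Qed.

End lin.

Section sgbound.
Context {R : realType} {E : completeNormedModType R} (T : R -> E -> E)
  (sg : semigroup T) (sc : strongly_continuous T).

Let BLT t : 0 <= t -> bounded_linear (T t).
Proof. by case: sg => h _ _; exact: h. Qed.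

Lemma T0 v : T 0 v = v.
Proof. by case: sg => _ -> _. Qed.

Lemma TD s t v : 0 <= s -> 0 <= t -> T (s + t) v = T s (T t v).
Proof. by case: sg => _ _ h s0 t0; rewrite h. Qed.

Lemma local_unit_bound : exists (d C : R), 0 < d /\
  forall s v, 0 <= s <= d -> `|v| <= 1 -> `|T s v| <= C.
Proof.
apply: contrapT => H.
have H' : forall n : nat, exists sv : R * E,
    0 <= sv.1 <= n.+1%:R^-1 /\ `|sv.2| <= 1 /\ n%:R < `|T sv.1 sv.2|.
  move=> n; apply: contrapT => Hn; apply: H.
  exists n.+1%:R^-1, n%:R; split; first by rewrite invr_gt0.
  move=> s v sd v1; rewrite leNgt; apply/negP => hlt; apply: Hn.
  by exists (s, v).
have [sv hsv] := choice H'.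
pose F : set (E -> E) := [set T (sv n).1 | n in setT].
have FB : forall f, F f -> bounded_fun_norm f /\ linear f.
  move=> _ [n _ <-]; have BL := BLT (sv n).1 (proj1 (andP (hsv n).1)).
  split; last by move=> a u v; exact: BL.1.
  move=> r; have [M hM] := BL.2; exists (`|M| * `|r|) => x xr.
  apply: le_trans (hM x) _; apply: le_trans (ler_wpM2r (normr_ge0 _) (ler_norm M)) _.
  apply: ler_wpM2l; first exact: normr_ge0.
  exact: le_trans xr (ler_norm r).
have pb : pointwise_bounded F.
  move=> x; have [d [d0 hd]] := sc x 1 ltr01.
  have [N hN] := exists_inv_lt _ d0.
  have : exists B, forall n, (n < N)%N -> `|T (sv n).1 x| <= B.
    elim: N {hN} => [|N [B hB]]; first by exists 0.
    exists (Num.max B `|T (sv N).1 x|) => n; rewrite ltnS leq_eqVlt => /orP[/eqP ->|nN].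
      by rewrite le_max lexx orbT.
    by rewrite le_max hB.
  move=> [B hB]; exists (Num.max B (`|x| + 1)) => _ [n _ <-].
  case: (ltnP n N) => nN; first by rewrite le_max hB.
  rewrite le_max; apply/orP; right.
  have s0 := (hsv n).1; case/andP: s0 => s0 s1.
  have sd : (sv n).1 < d.
    apply: le_lt_trans s1 _; apply: le_lt_trans hN.
    by rewrite lef_pV2 ?posrE // ler_nat ltnS.
  have := hd (sv n).1; rewrite s0 sd => /(_ isT) h.
  have -> : T (sv n).1 x = (T (sv n).1 x - x) + x by rewrite subrK.
  by apply: le_trans (ler_normD _ _) _; rewrite addrC lerD2l ltW.
have [M hM] := Banach_Steinhauss FB pb 1.
have [n hn] := exists_nat_gt M.
have := hM (T (sv n).1) (ex_intro2 _ _ n I erefl) (sv n).2 (hsv n).2.1.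
rewrite leNgt => /negP; apply; exact: lt_trans hn (hsv n).2.2.
Qed.

End sgbound.
Section sgbound2.
Context {R : realType} {E : completeNormedModType R} (T : R -> E -> E)
  (sg : semigroup T) (sc : strongly_continuous T).

Let BLT t : 0 <= t -> bounded_linear (T t).
Proof. by case: sg => h _ _; exact: h. Qed.

Lemma local_bound : exists (d C : R), 0 < d /\ 1 <= C /\
  forall s v, 0 <= s <= d -> `|T s v| <= C * `|v|.
Proof.
have [d [C0 [d0 hC]]] := local_unit_bound T sg sc.
exists d, (Num.max 1 C0); split => //; split; first by rewrite le_max lexx.
move=> s v /andP[s0 sd].
have BL := BLT s s0.
have [->|v0] := eqVneq v 0; first by rewrite (bl0 BL) !normr0 mulr0.
have nv0 : 0 < `|v| by rewrite normr_gt0.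
set w := `|v|^-1 *: v.
have hv : v = `|v| *: w by rewrite /w scalerA divff ?scale1r // gt_eqF.
rewrite {1}hv (blZ BL) normrZ normr_id (mulrC (Num.max 1 C0)); apply: ler_wpM2l; first exact: ltW.
apply: le_trans (hC s _ _ _) _; first by rewrite s0 sd.
  by rewrite /w normrZ normrV ?unitfE ?gt_eqF // normr_id mulVf // gt_eqF.
by rewrite le_max lexx orbT.
Qed.

Lemma global_bound : exists M : R, 1 <= M /\
  forall s v, 0 <= s <= 2 -> `|T s v| <= M * `|v|.
Proof.
have [d [C [d0 [C1 hC]]]] := local_bound.
have [K hK] := exists_nat_gt (2 / d).
have P : forall m : nat, forall s v, 0 <= s <= m.+1%:R * d -> `|T s v| <= C ^+ m.+1 * `|v|.
  elim=> [|m IH] s v /andP[s0 sd]; first by rewrite expr1; apply: hC; rewrite s0 -(mul1r d).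
  have [sd1|sd1] := leP s d.
    apply: le_trans (hC s v _) _; first by rewrite s0.
    apply: ler_wpM2r; first exact: normr_ge0.
    rewrite exprS -{1}(mulr1 C) ler_wpM2l //; first exact: le_trans ler01 C1.
    exact: exprn_ege1.
  have -> : s = d + (s - d) by rewrite addrC subrK.
  have sd0 : 0 <= s - d by rewrite subr_ge0 ltW.
  rewrite (TD T sg _ _ _ (ltW d0) sd0).
  apply: le_trans (hC _ _ _) _; first by rewrite ltW //= lexx.
  rewrite exprS -mulrA ler_wpM2l //; first exact: le_trans ler01 C1.
  apply: IH; rewrite sd0 /= lerBlDl.
  by move: sd; rewrite -[m.+2]addn1 natrD mulrDl mul1r addrC.
exists (C ^+ K.+1); split; first exact: exprn_ege1.
move=> s v /andP[s0 s2]; apply: P; rewrite s0 /=.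
apply: le_trans s2 _; rewrite -ler_pdivrMr //.
apply: le_trans (ltW hK) _; rewrite ler_nat; exact: leqnSn.
Qed.

End sgbound2.
Section avg.
Context {R : realType} {E : normedModType R}.

Definition avg (n : nat) (F : nat -> E) : E := n%:R^-1 *: \sum_(j < n) F j.

Lemma avg_const n (g : E) : (0 < n)%N -> avg n (fun _ => g) = g.
Proof.
move=> n0; rewrite /avg sumr_const card_ord -[g *+ n]scaler_nat scalerA mulVf ?scale1r //.
by rewrite pnatr_eq0 -lt0n.
Qed.

Lemma avgB n (F G : nat -> E) : avg n F - avg n G = avg n (fun j => F j - G j).
Proof. by rewrite /avg -scalerBr sumrB. Qed.

Lemma avg_le n (F : nat -> E) (B : R) : (0 < n)%N ->
  (forall j, (j < n)%N -> `|F j| <= B) -> `|avg n F| <= B.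
Proof.
move=> n0 hB; rewrite /avg normrZ.
have np : 0 < n%:R :> R by rewrite ltr0n.
rewrite normrV ?unitfE ?gt_eqF // (ger0_norm (ltW np)) mulrC ler_pdivrMr //.
apply: le_trans (ler_norm_sum _ _ _) _.
apply: le_trans (ler_sum _ (fun (j : 'I_n) _ => hB j (ltn_ord j))) _.
by rewrite sumr_const card_ord mulr_natr.
Qed.

Lemma avg_bl (A : E -> E) n F : bounded_linear A -> A (avg n F) = avg n (fun j => A (F j)).
Proof. by move=> BL; rewrite /avg (blZ BL) (blsum BL). Qed.

Lemma sum_mul a b (F : nat -> E) :
  \sum_(k < a * b) F k = \sum_(j < a) \sum_(l < b) F (j * b + l)%N.
Proof.
elim: a => [|a IH]; first by rewrite mul0n !big_ord0.
rewrite mulSn addnC big_split_ord /= IH big_ord_recr /=.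
by congr (_ + _); apply: eq_bigr => l _; rewrite addnC.
Qed.

Lemma avg_mul a b (F : nat -> E) : (0 < a)%N -> (0 < b)%N ->
  avg (a * b) F = avg a (fun j => avg b (fun l => F (j * b + l)%N)).
Proof.
move=> a0 b0; rewrite /avg sum_mul natrM invfM -scalerA scaler_sumr.
by congr (_ *: _); rewrite -scaler_sumr.
Qed.

Lemma sum_shift n q (F : nat -> E) :
  \sum_(j < n) F (j + q)%N - \sum_(j < n) F j =
  \sum_(j < q) F (n + j)%N - \sum_(j < q) F j.
Proof.
have aux : forall m, \sum_(j < q) F (m.+1 + j)%N = \sum_(j < q) F (m + j)%N + F (m + q)%N - F m.
  move=> m.
  have e1 : \sum_(j < q.+1) F (m + j)%N = \sum_(j < q) F (m + j)%N + F (m + q)%N.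
    exact: big_ord_recr.
  have e2 : \sum_(j < q.+1) F (m + j)%N = F (m + 0)%N + \sum_(j < q) F (m + bump 0 j)%N.
    exact: big_ord_recl.
  rewrite -e1 e2 addn0 [F m + _]addrC addrK.
  by apply: eq_bigr => j _; rewrite /bump /= add1n addnS addSn.
elim: n => [|n IH].
  rewrite !big_ord0 subrr; apply/esym/eqP; rewrite subr_eq0; apply/eqP.
  by apply: eq_bigr => j _; rewrite add0n.
rewrite !big_ord_recr /= aux.
have -> : \sum_(i < n) F (i + q)%N + F (n + q)%N - (\sum_(i < n) F i + F n) =
  (\sum_(i < n) F (i + q)%N - \sum_(i < n) F i) + F (n + q)%N - F n.
  by rewrite opprD !addrA; congr (_ + _); rewrite addrAC.
rewrite IH; set a := \sum_(j < q) F (n + j)%N; set b := \sum_(j < q) F j; by rewrite (addrAC a (- b)) (addrAC (a + F (n + q)%N) (- b) (- F n)).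
Qed.

End avg.
Section rsums.
Context {R : realType} {E : completeNormedModType R} (T : R -> E -> E)
  (sg : semigroup T) (M : R) (M1 : 1 <= M)
  (hM : forall s v, 0 <= s <= 2 -> `|T s v| <= M * `|v|).

Let BLT t : 0 <= t -> bounded_linear (T t).
Proof. by case: sg => h _ _; exact: h. Qed.

Definition rs (h : R) (g : E) (N : nat) : E :=
  avg (2 ^ N) (fun j => T (j%:R * (h / (2 ^ N)%:R)) g).

Lemma pow2_gt0 N : (0 < 2 ^ N)%N. Proof. by rewrite expn_gt0. Qed.

Lemma grid_ge0 (j n : nat) (h : R) : 0 <= h -> 0 <= j%:R * (h / n%:R).
Proof. by move=> h0; rewrite mulr_ge0 // divr_ge0. Qed.

Lemma grid_le (j n : nat) (h : R) : (0 < n)%N -> 0 <= h -> (j <= n)%N ->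
  j%:R * (h / n%:R) <= h.
Proof.
move=> n0 h0 jn; rewrite mulrA ler_pdivrMr ?ltr0n // mulrC.
by apply: ler_wpM2l => //; rewrite ler_nat.
Qed.

Lemma grid_lt (j n : nat) (h : R) : (0 < n)%N -> 0 < h -> (j < n)%N ->
  j%:R * (h / n%:R) < h.
Proof.
move=> n0 h0 jn; rewrite mulrA ltr_pdivrMr ?ltr0n // mulrC.
by rewrite ltr_pM2l // ltr_nat.
Qed.

Lemma rs_close h g N e : 0 < h ->
  (forall s, 0 <= s < h -> `|T s g - g| <= e) -> `|rs h g N - g| <= e.
Proof.
move=> h0 H; rewrite -{2}(avg_const _ g (pow2_gt0 N)) avgB.
apply: (avg_le _ _ _ (pow2_gt0 N)) => j jn; apply: H.
by rewrite grid_ge0 ?ltW // grid_lt // pow2_gt0.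
Qed.

Lemma Tcomm s t v : 0 <= s -> 0 <= t -> T t (T s v) = T s (T t v).
Proof. by move=> s0 t0; rewrite -!TD // addrC. Qed.

Lemma rs_comm h g N t : 0 < h <= 1 -> 0 <= t ->
  `|T t (rs h g N) - rs h g N| <= M * `|T t g - g|.
Proof.
move=> /andP[h0 h1] t0; rewrite /rs (avg_bl _ _ _ (BLT _ t0)) avgB.
apply: (avg_le _ _ _ (pow2_gt0 N)) => j jn.
have s0 := grid_ge0 j (2 ^ N) h (ltW h0).
rewrite Tcomm // -(blB (BLT _ s0)); apply: hM; rewrite s0 /=.
apply: le_trans (grid_le j (2 ^ N) h (pow2_gt0 N) (ltW h0) (ltnW jn)) _.
by apply: le_trans h1 _; rewrite ler1n.
Qed.


Lemma rs_cauchy h g N m e : 0 < h <= 1 ->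
  (forall s, 0 <= s < h / (2 ^ N)%:R -> `|T s g - g| <= e) ->
  `|rs h g (N + m) - rs h g N| <= M * e.
Proof.
move=> /andP[h0 h1] H.
set p := h / (2 ^ N)%:R.
have p0 : 0 < p by rewrite divr_gt0 // ltr0n pow2_gt0.
have -> : rs h g (N + m) = avg (2 ^ N) (fun j => T (j%:R * p) (rs p g m)).
  rewrite /rs expnD avg_mul ?pow2_gt0 //; congr avg; apply: funext => j.
  have s0 : 0 <= j%:R * p by rewrite mulr_ge0 // ltW.
  rewrite (avg_bl _ _ _ (BLT _ s0)); congr avg; apply: funext => l.
  rewrite -TD //; last by rewrite mulr_ge0 // divr_ge0 // ltW.
  have n1 : (2 ^ N)%:R != 0 :> R by rewrite pnatr_eq0 -lt0n pow2_gt0.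
  have n2 : (2 ^ m)%:R != 0 :> R by rewrite pnatr_eq0 -lt0n pow2_gt0.
  congr T; rewrite /p natrD !natrM; field.
  by rewrite n1 n2.
rewrite /rs avgB; apply: (avg_le _ _ _ (pow2_gt0 N)) => j jn.
have s0 : 0 <= j%:R * p by rewrite mulr_ge0 // ltW.
rewrite -(blB (BLT _ s0)); apply: le_trans (hM _ _ _) _.
  rewrite s0 /=; apply: le_trans (grid_le j (2 ^ N) h (pow2_gt0 N) (ltW h0) (ltnW jn)) _.
  by apply: le_trans h1 _; rewrite ler1n.
apply: ler_wpM2l; first exact: le_trans ler01 M1.
exact: rs_close.
Qed.

Lemma rs_lip h g N t e : 0 < h <= 1 -> 0 <= t <= h ->
  (forall s, 0 <= s < h / (2 ^ N)%:R -> `|T s g - g| <= e) ->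
  `|T t (rs h g N) - rs h g N| <= M * (2 * M * `|g| * (t / h)) + M * e.
Proof.
move=> /andP[h0 h1] /andP[t0 th] H.
have M0 : 0 <= M by exact: le_trans ler01 M1.
set n := (2 ^ N)%N; have n0 : (0 < n)%N := pow2_gt0 N.
have nR : 0 < n%:R :> R by rewrite ltr0n.
set p := h / n%:R; have p0 : 0 < p by rewrite divr_gt0.
set q := Num.trunc (t / p).
have /andP[qlo qhi] := truncn_itv (divr_ge0 t0 (ltW p0)).
have qp_le : q%:R * p <= t by rewrite -ler_pdivlMr.
have tlt : t < q%:R * p + p.
  by move: qhi; rewrite ltr_pdivrMr // -addn1 natrD mulrDl mul1r.
set r := t - q%:R * p.
have r0 : 0 <= r by rewrite subr_ge0.
have rp : r < p by rewrite /r; lra.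
have qp0 : 0 <= q%:R * p by rewrite mulr_ge0 // ltW.
have tE : t = r + q%:R * p by rewrite /r subrK.
have np : n%:R * p = h by rewrite /p mulrC divfK // gt_eqF.
set X := T (q%:R * p) (rs h g N) - rs h g N.
have XE : X = n%:R^-1 *: \sum_(j < q) (T ((n + j)%N%:R * p) g - T (j%:R * p) g).
  rewrite /X /rs -/n -/p (avg_bl _ _ _ (BLT _ qp0)).
  have -> : avg n (fun j => T (q%:R * p) (T (j%:R * p) g)) =
            avg n (fun j => T ((j + q)%N%:R * p) g).
    congr avg; apply: funext => j; rewrite -TD //; last by rewrite mulr_ge0 // ltW.
    by congr T; rewrite natrD mulrDl addrC.
  rewrite avgB /avg; congr (_ *: _).
  by rewrite sumrB (sum_shift n q (fun k => T (k%:R * p) g)) sumrB.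
have Xle : `|X| <= 2 * M * `|g| * (t / h).
  rewrite XE normrZ normrV ?unitfE ?gt_eqF // (ger0_norm (ltW nR)).
  have ni : 0 <= n%:R^-1 :> R by rewrite invr_ge0 ltW.
  apply: le_trans (ler_wpM2l ni (ler_norm_sum _ _ _)) _.
  have hj : forall j : 'I_q, `|T ((n + j)%N%:R * p) g - T (j%:R * p) g| <= 2 * M * `|g|.
    move=> j; have jq : (j%:R : R) * p <= q%:R * p.
      by apply: ler_wpM2r; [exact: ltW | rewrite ler_nat ltnW].
    have j0 : 0 <= (j%:R : R) * p by rewrite mulr_ge0 // ltW.
    apply: le_trans (ler_normB _ _) _.
    have e1 : `|T ((n + j)%N%:R * p) g| <= M * `|g|.
      apply: hM; rewrite natrD mulrDl np; apply/andP; split.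
        by apply: addr_ge0 => //; exact: ltW.
      by lra.
    have e2 : `|T (j%:R * p) g| <= M * `|g|.
      by apply: hM; apply/andP; split => //; lra.
    by lra.
  apply: le_trans (ler_wpM2l ni (ler_sum _ (fun j _ => hj j))) _.
  rewrite sumr_const card_ord -[2 * M * `|g| *+ q]mulr_natr.
  have -> : n%:R^-1 * (2 * M * `|g| * q%:R) = 2 * M * `|g| * (q%:R * p / h).
    rewrite /p; field; rewrite gt_eqF //= gt_eqF //.
  apply: ler_wpM2l; first by rewrite !mulr_ge0.
  by rewrite ler_pM2r // invr_gt0.
have TtE : T t (rs h g N) - rs h g N = T r X + (T r (rs h g N) - rs h g N).
  by rewrite {1}tE TD // /X (blB (BLT _ r0)) addrA subrK.
rewrite TtE; apply: le_trans (ler_normD _ _) _; apply: lerD.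
  apply: le_trans (hM _ _ _) _; first by apply/andP; split => //; lra.
  exact: ler_wpM2l.
apply: le_trans (rs_comm h g N r _ r0) _; first by rewrite h0 h1.
apply: ler_wpM2l => //; apply: H; rewrite r0 /=; exact: rp.
Qed.

End rsums.
Section regul.
Context {R : realType} {E : completeNormedModType R} (T : R -> E -> E)
  (sg : semigroup T) (sc : strongly_continuous T) (M : R) (M1 : 1 <= M)
  (hM : forall s v, 0 <= s <= 2 -> `|T s v| <= M * `|v|).

Let BLT t : 0 <= t -> bounded_linear (T t).
Proof. by case: sg => h _ _; exact: h. Qed.

Lemma sc_grid h g eps : 0 < h <= 1 -> 0 < eps -> exists N1 : nat, forall N, (N1 <= N)%N ->
  forall s, 0 <= s < h / (2 ^ N)%:R -> `|T s g - g| <= eps.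
Proof.
move=> /andP[h0 h1] eps0; have [d [d0 hd]] := sc g eps eps0.
have [K hK] := exists_inv_lt _ d0.
exists K => N KN s /andP[s0 sh]; apply: ltW; apply: hd; rewrite s0 /=.
apply: lt_le_trans sh _; apply: ltW; apply: le_lt_trans hK.
have p2 : 0 < (2 ^ N)%:R :> R by rewrite ltr0n pow2_gt0.
have hp : h / (2 ^ N)%:R <= (2 ^ N)%:R^-1 by rewrite ler_pdivrMr // mulVf ?gt_eqF.
apply: le_trans hp _.
rewrite lef_pV2 ?posrE ?ltr0n ?pow2_gt0 // ler_nat.
apply: leq_trans (ltn_expl N (isT : (1 < 2)%N)); by rewrite ltnS.
Qed.

Lemma reg h g : 0 < h <= 1 -> exists y : E,
  [/\ (forall e, (forall s, 0 <= s < h -> `|T s g - g| <= e) -> `|y - g| <= e),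
      (forall t, 0 <= t <= h -> `|T t y - y| <= M * (2 * M * `|g| * (t / h)))
    & (forall t, 0 <= t <= 2 -> `|T t y - y| <= M * `|T t g - g|)].
Proof.
move=> hh; have /andP[h0 h1] := hh.
have M0 : 0 < M by exact: lt_le_trans ltr01 M1.
pose u := rs T h g.
have CE : cauchy_ex (u @ \oo).
  move=> eps eps0.
  have [N1 hN1] := sc_grid h g (eps / (2 * M)) hh (divr_gt0 eps0 (mulr_gt0 (ltr0Sn _ 1) M0)).
  exists (u N1); exists N1 => // n /= hn; rewrite -ball_normE /ball_ /=.
  rewrite distrC -(subnKC hn).
  apply: le_lt_trans (rs_cauchy T sg M M1 hM h g N1 (n - N1) _ hh (hN1 N1 (leqnn N1))) _.
  have -> : M * (eps / (2 * M)) = eps / 2 by field; rewrite gt_eqF.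
  lra.
have cv : cvg (u @ \oo) by apply: cauchy_cvg; exact: cauchy_exP.
set y := lim (u @ \oo).
have approx : forall eps, 0 < eps -> forall N1, exists N, (N1 <= N)%N /\ `|y - u N| < eps.
  move=> eps eps0 N1; move/cvgrPdist_lt : cv => /(_ eps eps0) [N0 _ hN0].
  exists (maxn N0 N1); split; first exact: leq_maxr.
  by apply: hN0; rewrite /= leq_maxl.
have ident : forall t N, 0 <= t -> T t y - y = T t (y - u N) + (T t (u N) - u N) + (u N - y).
  move=> t N t0; rewrite (blB (BLT _ t0)).
  by rewrite -!addrA; congr (_ + _); rewrite !addrA addNr add0r addNr add0r.
exists y; split.
- move=> e He; apply/ler_addgt0Pr => eps eps0.
  have [N [_ hN]] := approx eps eps0 0%N.
  apply: le_trans (ler_distD (u N) y g) _.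
  have := rs_close T h g N e h0 He; rewrite -/u => h2.
  lra.
- move=> t /andP[t0 th]; apply/ler_addgt0Pr => eps eps0.
  have hh2 : 0 < eps / (2 * M) by apply: divr_gt0 => //; apply: mulr_gt0 => //; exact: ltr0Sn.
  have [N1 hN1] := sc_grid h g _ hh hh2.
  have M1' : 0 < 2 * (M + 1) by apply: mulr_gt0 => //; lra.
  have [N [N1N hN]] := approx (eps / (2 * (M + 1))) (divr_gt0 eps0 M1') N1.
  rewrite (ident t N t0).
  have t2 : 0 <= t <= 2 by apply/andP; split => //; lra.
  have e1 := hM t (y - u N) t2.
  have e2 := rs_lip T sg M M1 hM h g N t _ hh (ltac:(by rewrite t0 th)) (hN1 N N1N).
  rewrite -/u in e2.
  have e3 : M * (eps / (2 * M)) = eps / 2 by field; rewrite gt_eqF.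
  rewrite e3 in e2.
  have Mn : M + 1 != 0 by rewrite gt_eqF //; lra.
  have e4 : (M + 1) * `|y - u N| < eps / 2.
    have -> : eps / 2 = (M + 1) * (eps / (2 * (M + 1))) by field.
    by rewrite ltr_pM2l //; lra.
  apply: le_trans (ler_normD _ _) _; apply: le_trans (lerD (ler_normD _ _) (lexx _)) _.
  rewrite (distrC (u N) y); move: e4; rewrite mulrDl mul1r => e4.
  lra.
- move=> t t02; have /andP[t0 _] := t02; apply/ler_addgt0Pr => eps eps0.
  have M1' : 0 < M + 1 by lra.
  have [N [_ hN]] := approx (eps / (M + 1)) (divr_gt0 eps0 M1') 0%N.
  rewrite (ident t N t0).
  have e1 := hM t (y - u N) t02.
  have e2 := rs_comm T sg M hM h g N t hh t0.
  rewrite -/u in e2.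
  have Mn : M + 1 != 0 by rewrite gt_eqF.
  have e4 : (M + 1) * `|y - u N| < eps.
    have -> : eps = (M + 1) * (eps / (M + 1)) by field.
    by rewrite ltr_pM2l.
  apply: le_trans (ler_normD _ _) _; apply: le_trans (lerD (ler_normD _ _) (lexx _)) _.
  rewrite (distrC (u N) y); move: e4; rewrite mulrDl mul1r => e4.
  lra.
Qed.

End regul.
Section st.
Context {R : realType} {E : normedModType R} {I : Type} {U : set (set I)} (HU : ultrafilter_on U).

Lemma st_quot (S : set (I -> E)) (x : I -> E) :
  bounded_family x -> (forall c, S c -> cU U c) ->
  (forall J, U J -> S (fun i => if pselect (J i) then 0 else x i)) ->
  is_st U (fun i => `|x i|) (quot_norm S x).
Proof.
move=> bx SC Sj n.
set q := quot_norm S x; set e : R := n.+1%:R^-1.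
have e0 : 0 < e by rewrite invr_gt0.
have I0 := Inonempty HU.
set A := [set linf_norm (fun i => x i - c i) | c in S].
have Alb : has_lbound A.
  by exists 0 => _ [c Sc <-]; exact: (linf_ge0 _ I0 (bounded_sub bx (SC c Sc).1)).
have Ane : nonempty A by exists (linf_norm (fun i => x i - (fun i => if pselect (setT i) then 0 else x i) i)), (fun i => if pselect (setT i) then 0 else x i) => //; exact: Sj (UT HU).
have qle : forall c, S c -> q <= linf_norm (fun i => x i - c i).
  by move=> c Sc; apply: ge_inf Alb _ _; exists c.
have h1 : U [set i | q - e < `|x i|].
  apply: contrapT => nU; have UJ := Ucompl HU nU.
  have [j Jj] := Une HU UJ.
  have xj : `|x j| <= q - e by rewrite leNgt; apply/negP.
  have := qle _ (Sj _ UJ); apply/negP; rewrite -ltNge.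
  apply: (le_lt_trans (y := q - e)); last by rewrite ltrBlDr ltrDl.
  apply: (linf_le _ _ I0) => i; case: pselect => Ji.
    by rewrite subr0 leNgt; apply/negP.
  by rewrite subrr normr0; exact: le_trans (normr_ge0 _) xj.
have h2 : U [set i | `|x i| < q + e].
  apply: contrapT => nU; have UJ := Ucompl HU nU.
  suff : q + e / 2 <= q by rewrite gerDl leNgt divr_gt0.
  apply: (lb_le_inf Ane) => _ [c Sc <-].
  have [J' [UJ' hJ']] := (SC c Sc).2 (e / 2) (divr_gt0 e0 (ltr0Sn _ 1)).
  have [i [Ji J'i]] := Une HU (UI HU UJ UJ').
  have xi : q + e <= `|x i| by rewrite leNgt; apply/negP.
  apply: le_trans (linf_ge _ i (bounded_sub bx (SC c Sc).1)).
  apply: le_trans (lerB_dist _ _).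
  have ci := hJ' i J'i.
  lra.
apply: (Umono HU _ (UI HU h1 h2)) => i [/= a b].
by rewrite ltr_distl a b.
Qed.

End st.
Section conj.
Context {R : realType} {E : completeNormedModType R} {I : Type} {U : set (set I)} (HU : ultrafilter_on U).

Lemma cut_bounded (x : I -> E) (J : set I) : bounded_family x ->
  bounded_family (fun i => if pselect (J i) then 0 else x i).
Proof.
move=> [M hM]; exists M => i; case: pselect => Ji; last exact: hM.
by rewrite normr0; exact: le_trans (normr_ge0 _) (hM i).
Qed.

Lemma cut_cU (x : I -> E) (J : set I) : bounded_family x -> U J ->
  cU U (fun i => if pselect (J i) then 0 else x i).
Proof.
move=> bx UJ; split; first exact: cut_bounded.
move=> e e0; exists J; split => // i Ji; case: pselect => // Ji2.
by rewrite normr0.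
Qed.

Lemma cut_mT (T : R -> E -> E) (x : I -> E) (J : set I) : semigroup T -> mT T x ->
  mT T (fun i => if pselect (J i) then 0 else x i).
Proof.
move=> sg [bx hx]; split; first exact: cut_bounded.
move=> e e0; have [d [d0 hd]] := hx e e0; exists d; split => // t /andP[t0 td].
have BL : bounded_linear (T t) by case: sg => h _ _; apply: h; exact: ltW.
apply: le_lt_trans (hd t _); last by rewrite t0 td.
apply: (linf_le _ _ (Inonempty HU)) => i; case: pselect => Ji.
  rewrite (bl0 BL) subrr normr0; exact: (linf_ge0 _ (Inonempty HU) (bounded_Tx BL bx)).
exact: (linf_ge (fun j => T t (x j) - x j) i (bounded_Tx BL bx)).
Qed.

End conj.
Lemma conj6 (R : realType) (E : completeNormedModType R)
  (T : R -> E -> E) (I : Type) (U : set (set I)) :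
  semigroup T -> strongly_continuous T ->
  ultrafilter_on U -> countably_incomplete U ->
  (forall f : I -> E, E_T U T f ->
     exists x, mT T x /\ ns_approx U (Phi x) f).
Proof.
move=> sg sc HU [J [UJ nUJ]] f [[n0 Fn0] hE].
have [M [M1 hM]] := global_bound T sg sc.
have M0 : 0 < M by exact: lt_le_trans ltr01 M1.
have hd : forall k : nat, exists d : R, 0 < d /\ forall t : I -> R,
    U [set i | 0 < t i < d] -> U [set i | `|T (t i) (f i) - f i| < k.+1%:R^-1].
  by move=> k; apply: hE; rewrite invr_gt0.
have [dd hdd] := choice hd.
pose B k := [set i | forall s, 0 < s < dd k -> `|T s (f i) - f i| < k.+1%:R^-1].
have UB : forall k, U (B k).
  move=> k; apply: contrapT => nB; have UnB := Ucompl HU nB.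
  have ht : forall i, exists t : R, 0 < t < dd k /\
      (~ B k i -> k.+1%:R^-1 <= `|T t (f i) - f i|).
    move=> i; case: (pselect (B k i)) => Bi.
      exists (dd k / 2); split => //; have d0 := (hdd k).1; apply/andP; split; lra.
    have [s hs] := (existsNP _).2 Bi.
    move/not_implyP: hs => [s01 hs2].
    by exists s; split => // _; rewrite leNgt; apply/negP.
  have [tt htt] := choice ht.
  have Ult := (hdd k).2 tt (Uall HU _ (fun i => (htt i).1)).
  have [i [lt nBi]] := Une HU (UI HU Ult UnB).
  by have := (htt i).2 nBi; rewrite leNgt lt.
pose D := ~` [set i | forall n, J n i].
have UD : U D := Ucompl HU nUJ.
pose F := [set i | `| `|f i| | < n0%:R].
pose C k := [set i | F i /\ D i /\ forall m, (m <= k)%N -> B m i /\ J m i].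
have UC : forall k, U (C k).
  elim=> [|k IH].
    apply: (Umono HU _ (UI HU (UI HU Fn0 UD) (UI HU (UB 0%N) (UJ 0%N)))).
    move=> i [[Fi Di] [Bi Ji]]; split => //; split => // m.
    by rewrite leqn0 => /eqP ->.
  apply: (Umono HU _ (UI HU IH (UI HU (UB k.+1) (UJ k.+1)))).
  move=> i [[Fi [Di H]] [Bi Ji]]; split => //; split => // m.
  by rewrite leq_eqVlt => /orP[/eqP -> // | ]; rewrite ltnS; exact: H.
have Cmono : forall k m, (k <= m)%N -> C m `<=` C k.
  move=> k m km i [Fi [Di H]]; split => //; split => // m' m'k.
  by apply: H; exact: leq_trans m'k km.
have lev_ex : forall i, exists k : nat, C 0%N i -> C k i /\ ~ C k.+1 i.
  move=> i; apply: contrapT => H.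
  have C0i : C 0%N i by apply: contrapT => nC; apply: H; exists 0%N => /nC.
  have allC : forall k, C k i.
    elim=> // k IH; apply: contrapT => nC; apply: H; exists k => _; split => //.
  have := (allC 0%N).2.1; apply => m; exact: ((allC m).2.2 m (leqnn m)).2.
have [lev hlev] := choice lev_ex.
have levP : forall m i, C m i -> (m <= lev i)%N.
  move=> m i Cmi; have C0i : C 0%N i := Cmono 0%N m (leq0n m) i Cmi.
  have [_ nC] := hlev i C0i; rewrite leqNgt; apply/negP => lt; apply: nC.
  exact: Cmono _ _ lt i Cmi.
pose hh := fix hh (k : nat) : R :=
  if k is k'.+1 then Num.min (hh k') (dd k'.+1) else Num.min 1 (dd 0%N).
have hpos : forall k, 0 < hh k <= 1.
  elim=> [|k IH] /=.
    by rewrite lt_min ltr01 (hdd 0%N).1 ge_min lexx.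
  case/andP: IH => a b; rewrite lt_min a (hdd k.+1).1 /=.
  by rewrite ge_min b.
have hstep : forall k d, hh (k + d)%N <= hh k.
  move=> k; elim=> [|d IH]; first by rewrite addn0.
  by rewrite addnS /=; apply: le_trans IH; rewrite ge_min lexx.
have hdec : forall k m, (k <= m)%N -> hh m <= hh k.
  by move=> k m km; rewrite -(subnKC km); exact: hstep.
have hledd : forall m, hh m <= dd m.
  by case=> [|m] /=; rewrite ge_min lexx orbT.
have hle : forall m k, (m <= k)%N -> hh k <= dd m.
  by move=> m k mk; apply: le_trans (hdec _ _ mk) (hledd m).
have regi : forall i, exists y : E,
  [/\ (forall e, (forall s, 0 <= s < hh (lev i) -> `|T s (f i) - f i| <= e) -> `|y - f i| <= e),
      (forall t, 0 <= t <= hh (lev i) -> `|T t y - y| <= M * (2 * M * `|f i| * (t / hh (lev i))))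
    & (forall t, 0 <= t <= 2 -> `|T t y - y| <= M * `|T t (f i) - f i|)].
  by move=> i; exact: reg T sg sc M M1 hM (hh (lev i)) (f i) (hpos (lev i)).
have [yy hyy] := choice regi.
pose x := fun i => if pselect (C 0%N i) then yy i else 0.
exists x; split.
have Fb : forall i, C 0%N i -> `|f i| < n0%:R.
  by move=> i [Fi _]; move: Fi; rewrite /F /= normr_id.
have n0pos : 0 <= n0%:R :> R := ler0n _ _.
have yb : forall i, C 0%N i -> `|yy i| <= (M + 2) * n0%:R.
  move=> i Ci; have [ha _ _] := hyy i.
  have hs : forall s, 0 <= s < hh (lev i) -> `|T s (f i) - f i| <= (M + 1) * `|f i|.
    move=> s /andP[s0 sh]; apply: le_trans (ler_normB _ _) _.
    have s2 : 0 <= s <= 2.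
      by rewrite s0 /=; have := hpos (lev i); case/andP => _ h1; lra.
    have := hM s (f i) s2; rewrite mulrDl mul1r => h; exact: lerD.
  have e1 := ha _ hs.
  have e2 := Fb i Ci.
  have e3 : `|yy i| <= `|yy i - f i| + `|f i| by have := ler_normD (yy i - f i) (f i); rewrite subrK.
  have e4 : (M + 2) * `|f i| <= (M + 2) * n0%:R.
    by apply: ler_wpM2l; [lra | exact: ltW].
  move: e1 e4; rewrite !mulrDl !mul1r => e1 e4; lra.
split.
  exists ((M + 2) * n0%:R) => i; rewrite /x; case: pselect => [Ci|nC]; first exact: yb.
  by rewrite normr0 mulr_ge0 //; lra.
move=> eps eps0.
have e2M : 0 < eps / (2 * M) by apply: divr_gt0 => //; lra.
have [j hj] := exists_inv_lt _ e2M.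
set c := M * M * n0%:R.
have c0 : 0 <= c by rewrite !mulr_ge0 //; lra.
set K := 4 * c + 1.
have K0 : 0 < K by rewrite /K; lra.
have hj0 := hpos j; case/andP: hj0 => hj0 hj1.
exists (Num.min (hh j) (hh j * eps / K)); split.
  by rewrite lt_min hj0 /= !divr_gt0 // mulr_gt0.
move=> t /andP[t0]; rewrite lt_min => /andP[th tK].
have t2 : 0 <= t <= 2 by apply/andP; split; lra.
have BLt : bounded_linear (T t) by case: sg => h _ _; apply: h; exact: ltW.
have eM : M * j.+1%:R^-1 < eps / 2.
  have -> : eps / 2 = M * (eps / (2 * M)) by field; rewrite gt_eqF.
  by rewrite ltr_pM2l.
apply: le_lt_trans (linf_le _ (eps / 2) (Inonempty HU) _) _; last lra.
move=> i; rewrite /x; case: pselect => [Ci|nC]; last first.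
  by rewrite (bl0 BLt) subrr normr0; lra.
have [_ hb hc] := hyy i.
have Cli := (hlev i Ci).1.
case: (leqP j (lev i)) => jl.
  have Bj : B j i := ((Cmono _ _ jl i Cli).2.2 j (leqnn j)).1.
  apply: le_trans (hc t t2) _.
  have tdd : t < dd j by apply: lt_le_trans th (hledd j).
  have hb' := Bj t (ltac:(by rewrite t0 tdd)).
  apply: le_trans (ltW eM); apply: ler_wpM2l; [exact: ltW | exact: ltW].
have hl : hh j <= hh (lev i) := hdec _ _ (ltnW jl).
have tl : 0 <= t <= hh (lev i) by rewrite (ltW t0) /=; apply: ltW; exact: lt_le_trans th hl.
apply: le_trans (hb t tl) _.
have H0 : 0 < hh (lev i) by case/andP: (hpos (lev i)).
set w := t / hh (lev i).
have w0 : 0 <= w by rewrite /w divr_ge0 // ltW.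
have w1 : w <= t / hh j.
  by rewrite /w; apply: ler_wpM2l; [exact: ltW | rewrite lef_pV2].
have w2 : w * K <= eps.
  apply: le_trans (ler_wpM2r (ltW K0) w1) _.
  move: tK; rewrite ltr_pdivlMr // => tK.
  rewrite mulrAC ler_pdivrMr // (mulrC eps); exact: ltW.
have a0 := Fb i Ci.
have s1 : M * (2 * M * `|f i| * w) <= 2 * c * w.
  have -> : M * (2 * M * `|f i| * w) = 2 * (M * M * `|f i|) * w by ring.
  apply: ler_wpM2r => //; apply: ler_wpM2l => //; apply: ler_wpM2l; first exact: mulr_ge0 (ltW M0) (ltW M0).
  exact: ltW.
move: w2; rewrite /K => w2; lra.
move=> m; apply: (Umono HU _ (UC m.+1)) => i Ci /=.
have C0i : C 0%N i := Cmono 0%N m.+1 (leq0n _) i Ci.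
have lv := levP _ _ Ci.
rewrite /Phi /x; case: pselect => [yC|nC0]; last by case: (nC0 C0i).
rewrite normr_id.
have Bi : B m.+1 i := (Ci.2.2 m.+1 (leqnn _)).1.
have [ha _ _] := hyy i.
have hs : forall s, 0 <= s < hh (lev i) -> `|T s (f i) - f i| <= m.+2%:R^-1.
  move=> s /andP[s0 sh]; have [->|sn0] := eqVneq s 0.
    by rewrite (T0 T sg) subrr normr0 invr_ge0 ler0n.
  apply: ltW; apply: Bi; rewrite lt_neqAle eq_sym sn0 s0 /=.
  exact: lt_le_trans sh (hle _ _ lv).
apply: le_lt_trans (ha _ hs) _.
by rewrite ltf_pV2 ?posrE ?ltr0n // ltr_nat.
Qed.
Theorem mainTheorem1 (R : realType) (E : completeNormedModType R)
  (T : R -> E -> E) (I : Type) (U : set (set I)) :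
  semigroup T -> strongly_continuous T ->
  ultrafilter_on U -> countably_incomplete U ->
  (* Phi : l^oo/c_U -> hat E is well defined and injective *)
  (forall x y : I -> E, bounded_family x -> bounded_family y ->
     (cU U (fun i => x i - y i) <-> ns_approx U (Phi x) (Phi y))) /\
  (* Phi lands in hat E *)
  (forall x : I -> E, bounded_family x -> ns_fin U (Phi x)) /\
  (* Phi is onto *)
  (forall f : I -> E, ns_fin U f ->
     exists x, bounded_family x /\ ns_approx U (Phi x) f) /\
  (* Phi is isometric: ||Phi(x + c_U)|| = st(||x||) = ||x + c_U|| *)
  (forall x : I -> E, bounded_family x ->
     is_st U (fun i => `|Phi x i|) (quot_norm (cU U) x)) /\
  (* Phi (iota (m^T / (c_U cap m^T))) = hat E_T *)
  (forall x : I -> E, mT T x ->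
     exists f, E_T U T f /\ ns_approx U (Phi x) f) /\
  (forall f : I -> E, E_T U T f ->
     exists x, mT T x /\ ns_approx U (Phi x) f) /\
  (* Phi o iota is isometric for the quotient norm of m^T/(c_U cap m^T) *)
  (forall x : I -> E, mT T x ->
     is_st U (fun i => `|Phi x i|) (quot_norm (cU U `&` mT T) x)).
Proof.
move=> sg sc HU ci.
have c2 : forall x : I -> E, bounded_family x -> ns_fin U (Phi x).
  move=> x [M hM]; have [n hn] := exists_nat_gt M; exists n.
  by apply: (Uall HU) => i /=; rewrite normr_id; exact: le_lt_trans (hM i) hn.
have appr0 : forall x : I -> E, ns_approx U x x.
  by move=> x n; apply: (Uall HU) => i /=; rewrite subrr !normr0 invr_gt0 ltr0Sn.
split.
  move=> x y bx bY; split.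
    move=> [_ h] n.
    have [J [UJ hJ]] := h n.+1%:R^-1 (ltac:(by rewrite invr_gt0 ltr0Sn)).
    by apply: (Umono HU _ UJ) => i /hJ /=; rewrite normr_id.
  move=> h; split; first exact: bounded_sub.
  move=> e e0; have [n hn] := exists_inv_lt _ e0; exists [set i | `|x i - y i| < n.+1%:R^-1].
  split; last by move=> i /= hi; exact: lt_trans hi hn.
  by apply: (Umono HU _ (h n)) => i /=; rewrite normr_id.
split; first exact: c2.
split.
  move=> f [n Fn].
  exists (fun i => if pselect (`|f i| < n%:R) then f i else 0); split.
    by exists n%:R => i; case: pselect => h; [exact: ltW | rewrite normr0].
  move=> m; apply: (Umono HU _ Fn) => i /=. rewrite normr_id => hi.
  by rewrite /Phi; case: pselect => // hh; rewrite subrr !normr0 invr_gt0 ltr0Sn.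
split.
  move=> x bx; apply: (st_quot HU _ _ bx (fun c h => h)) => J UJ; exact: cut_cU.
split.
  move=> x [bx hx]; exists x; split; last exact: appr0.
  split; first exact: c2.
  move=> e e0; have [d [d0 hd]] := hx e e0; exists d; split => // t Ut.
  apply: (Umono HU _ Ut) => i /= ti.
  have BL : bounded_linear (T (t i)).
    by case: sg => h _ _; apply: h; case/andP: ti => a _; exact: ltW.
  exact: le_lt_trans (linf_ge (fun j => T (t i) (x j) - x j) i (bounded_Tx BL bx)) (hd _ ti).
split; first exact: conj6.
move=> x mx; apply: (st_quot HU (cU U `&` mT T) x mx.1) => [c [] //|J UJ]; split.
  exact: cut_cU mx.1 UJ.
exact: (cut_mT HU _ _ _ sg mx).
Qed.
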